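(* Let $S=\sum_{i=1}^r u_i^{\otimes 3}$ be a symmetric tensor in $\mathbb{C}^{n\times n\times n}$, where $u_1,\dots,u_r\in\mathbb{C}^n$ are pairwise orthogonal nonzero vectors. Then the slices of $S$ pairwise commute. Moreover, the following are equivalent: (i) all the $u_i$ are isotropic; (ii) the product of any two (possibly equal) slices of $S$ is the zero matrix. Consequently, if (i) holds, then in any other decomposition $S=\sum_{i=1}^q v_i^{\otimes 3}$ with $v_1,\dots,v_q$ pairwise orthogonal nonzero vectors, all the $v_i$ are isotropic.
   Context: The $k$-th slice of a symmetric tensor $S$ is $S_k=(S_{ijk})_{1\le i,j\le n}$. $\langle x,y\rangle=\sum_i x_iy_i$ on $\mathbb{C}^n$ (bilinear, non-Hermitian); $u,v$ are orthogonal if $\langle u,v\rangle=0$; a nonzero vector $v$ is isotropic if $\langle v,v\rangle=0$. *)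

(* Defs.v *)
From HB Require Import structures.
From mathcomp Require Import all_boot all_order all_algebra.
Set Implicit Arguments. Unset Strict Implicit. Unset Printing Implicit Defensive.
Import Order.TTheory GRing.Theory Num.Theory.
Local Open Scope ring_scope.

(* Bilinear (non-Hermitian) form <x,y> = sum_i x_i y_i on row vectors. *)
Definition bdot (R : numClosedFieldType) (n : nat) (x y : 'rV[R]_n) : R :=
  \sum_(i < n) x 0 i * y 0 i.

Definition orthogonal_vec (R : numClosedFieldType) (n : nat) (x y : 'rV[R]_n) : Prop :=
  bdot x y = 0.

Definition isotropic (R : numClosedFieldType) (n : nat) (v : 'rV[R]_n) : Prop :=
  v != 0 /\ bdot v v = 0.

Definition tensor3 (R : numClosedFieldType) (n : nat) := 'I_n -> 'I_n -> 'I_n -> R.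

Definition sym_decomp (R : numClosedFieldType) (n r : nat) (u : 'I_r -> 'rV[R]_n)
  : tensor3 R n :=
  fun i j k => \sum_(a < r) u a 0 i * u a 0 j * u a 0 k.

Definition slice (R : numClosedFieldType) (n : nat) (S : tensor3 R n) (k : 'I_n) : 'M[R]_n :=
  \matrix_(i, j) S i j k.

(* Main.v *)
Require Import Defs.
From HB Require Import structures.
From mathcomp Require Import all_boot all_order all_algebra.
From mathcomp Require Import ring.
Import GRing.Theory Num.Theory.
Local Open Scope ring_scope.

Section H.
Variables (R : numClosedFieldType) (n r : nat) (u : 'I_r -> 'rV[R]_n).
Hypothesis u_orth : forall a b, a != b -> orthogonal_vec (u a) (u b).

Lemma prod_entry k l i j :
  (slice (sym_decomp u) k *m slice (sym_decomp u) l) i j =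
  \sum_a (bdot (u a) (u a) * (u a 0 i * u a 0 j * u a 0 k * u a 0 l)).
Proof.
rewrite !mxE.
under eq_bigr => m _ do rewrite !mxE /sym_decomp big_distrl /=.
rewrite exchange_big /=; apply: eq_bigr => a _.
under eq_bigr => m _ do rewrite mulr_sumr.
rewrite exchange_big /= (bigD1 a) //= [X in _ + X]big1 ?addr0.
  rewrite /bdot mulr_suml; apply: eq_bigr => m _; ring.
move=> b Hba.
have h := u_orth _ _ Hba; rewrite /orthogonal_vec /bdot in h.
have -> : \sum_(i0 < n) u a 0 i * u a 0 i0 * u a 0 k * (u b 0 i0 * u b 0 j * u b 0 l)
  = (u a 0 i * u a 0 k * u b 0 j * u b 0 l) * \sum_(i0 < n) u b 0 i0 * u a 0 i0.
  rewrite mulr_sumr; apply: eq_bigr => m _; ring.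
by rewrite h mulr0.
Qed.

Lemma contract (f : 'I_r -> R) b :
  (forall i, \sum_a f a * u a 0 i = 0) -> f b * bdot (u b) (u b) = 0.
Proof.
move=> H.
have : \sum_i u b 0 i * (\sum_a f a * u a 0 i) = 0 by apply: big1 => i _; rewrite H mulr0.
under eq_bigr do rewrite mulr_sumr.
rewrite exchange_big /= (bigD1 b) //= [X in _ + X]big1 ?addr0.
  move=> <-; rewrite /bdot mulr_sumr; apply: eq_bigr => m _; ring.
move=> a Hab.
have h := u_orth _ _ Hab; rewrite /orthogonal_vec /bdot in h.
have -> : \sum_(i < n) u b 0 i * (f a * u a 0 i) = f a * \sum_(i < n) u a 0 i * u b 0 i.
  rewrite mulr_sumr; apply: eq_bigr => m _; ring.
by rewrite h mulr0.
Qed.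

Lemma part12 (u_nz : forall a, u a != 0) :
  (forall k l : 'I_n,
      slice (sym_decomp u) k *m slice (sym_decomp u) l
      = slice (sym_decomp u) l *m slice (sym_decomp u) k)
  /\ ((forall a, isotropic (u a)) <->
      (forall k l : 'I_n, slice (sym_decomp u) k *m slice (sym_decomp u) l = 0)).
Proof.
split.
  move=> k l; apply/matrixP => i j; rewrite !prod_entry.
  apply: eq_bigr => a _; ring.
split.
  move=> Hi k l; apply/matrixP => i j; rewrite prod_entry mxE.
  by apply: big1 => a _; case: (Hi a) => _ ->; rewrite mul0r.
move=> H b; split; first exact: u_nz.
have [j Hj] : exists j, u b 0 j != 0.
  apply/existsP; move: (u_nz b); apply: contraR; rewrite negb_exists => /forallP Hf.
  apply/eqP/rowP => m; rewrite mxE; have := Hf m; rewrite negbK => /eqP ->.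
  by [].

have := @contract (fun a => bdot (u a) (u a) * u a 0 j ^+ 3) b.
have E : forall i, \sum_a (bdot (u a) (u a) * u a 0 j ^+ 3) * u a 0 i = 0.
  move=> i; have := H j j; move/matrixP => /(_ i j); rewrite prod_entry mxE => h.
  rewrite -[RHS]h; apply: eq_bigr => a _; ring.
move=> /(_ E) /eqP; rewrite !mulf_eq0 (negbTE Hj) /= orbF orbb.
by move/eqP.
Qed.
End H.

Theorem proposition28 (R : numClosedFieldType) (n r : nat) (u : 'I_r -> 'rV[R]_n)
  (u_nz : forall a, u a != 0)
  (u_orth : forall a b, a != b -> orthogonal_vec (u a) (u b)) :
  (forall k l : 'I_n,
      slice (sym_decomp u) k *m slice (sym_decomp u) l
      = slice (sym_decomp u) l *m slice (sym_decomp u) k)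
  /\ ((forall a, isotropic (u a)) <->
      (forall k l : 'I_n, slice (sym_decomp u) k *m slice (sym_decomp u) l = 0))
  /\ ((forall a, isotropic (u a)) ->
      forall (q : nat) (v : 'I_q -> 'rV[R]_n),
        (forall b, v b != 0) ->
        (forall b c, b != c -> orthogonal_vec (v b) (v c)) ->
        (forall i j k, sym_decomp v i j k = sym_decomp u i j k) ->
        forall b, isotropic (v b)).
Proof.
have [P1 P2] := @part12 _ _ _ u u_orth u_nz.
split=> //; split=> //.
move=> Hi q v v_nz v_orth Hs.
have [_ [_ Q]] := @part12 _ _ _ v v_orth v_nz.
apply: Q => k l.
have E : forall k, slice (sym_decomp v) k = slice (sym_decomp u) k.
  by move=> k'; apply/matrixP => i j; rewrite !mxE Hs.
by rewrite !E; exact: (proj1 P2 Hi k l).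
Qed.
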